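(* Let $n$ be a positive integer, $d\in\Delta(n)$, and write $d=(1,2,\dots,q,q^{(s_q)},(q-1)^{(s_{q-1})},\dots,1^{(s_1)})$ with $q\ge1$ and $s_1,\dots,s_q\ge0$ integers. Let $\overline{\alpha}=(\overline{\alpha}_1,\dots,\overline{\alpha}_q)$ with $\overline{\alpha}_i=q-i+1+\sum_{k=i}^q s_k$, and let $\underline{\alpha}=\overline{\alpha}^*$ be its conjugate partition. Then for every $\alpha\in[\,d\,]$ we have $\overline{\alpha}\succ\alpha\succ\underline{\alpha}$.
   Context: A partition of a positive integer $n$ is a finite non-increasing sequence $\alpha=(\alpha_1,\dots,\alpha_l)$ of positive integers with sum $n$; $\mathcal{P}(n)$ is the set of partitions of $n$, and $\alpha_i=0$ for $i>l$. The diagonal sequence is $\delta(\alpha)=(d_k)_{k\ge1}$, $d_k=|\{i:1\le i\le k,\ \alpha_i+i-1\ge k\}|$ (trailing zeros omitted). $\Delta(n)=\{\delta(\alpha):\alpha\in\mathcal{P}(n)\}$, $[\,d\,]=\{\alpha\in\mathcal{P}(n):\delta(\alpha)=d\}$. Every $d\in\Delta(n)$ has the stated form, where $j^{(s)}$ denotes $s$ consecutive entries equal to $j$. The conjugate $\alpha^*$ of $\alpha$ has parts $\alpha^*_j=|\{i:\alpha_i\ge j\}|$. For $\alpha=(\alpha_1,\dots,\alpha_s),\beta=(\beta_1,\dots,\beta_t)\in\mathcal{P}(n)$, $\alpha\succ\beta$ ($\alpha$ majorizes $\beta$) means $\sum_{i=1}^k\alpha_i\ge\sum_{i=1}^k\beta_i$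 for all $1\le k\le\min\{s,t\}$. *)

(* Defs.v *)
From mathcomp Require Import all_boot.
Set Implicit Arguments. Unset Strict Implicit. Unset Printing Implicit Defensive.

(* Entries are 0-indexed in the seq: alpha_i (1-indexed) = nth 0 alpha (i-1),
   and alpha_i = 0 for i > size alpha, matching the paper's convention. *)
Definition is_partition (n : nat) (a : seq nat) : bool :=
  [&& sorted geq a, all (fun x => 0 < x) a & sumn a == n].

Definition diag_entry (a : seq nat) (k : nat) : nat :=
  count (fun i => k <= nth 0 a i.-1 + i.-1) (iota 1 k).

Definition strip0 (s : seq nat) : seq nat :=
  rev (drop (find (fun x => x != 0) (rev s)) (rev s)).

(* delta(alpha) with trailing zeros omitted; d_k = 0 for k > |alpha|. *)
Definition diag (a : seq nat) : seq nat :=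
  strip0 [seq diag_entry a k | k <- iota 1 (sumn a)].

Definition in_Delta (n : nat) (d : seq nat) : Prop :=
  exists a, is_partition n a /\ diag a = d.

Definition dseq (q : nat) (s : nat -> nat) : seq nat :=
  iota 1 q ++ flatten [seq nseq (s j) j | j <- rev (iota 1 q)].

Definition alphabar (q : nat) (s : nat -> nat) : seq nat :=
  [seq q - i + 1 + \sum_(i <= k < q.+1) s k | i <- iota 1 q].

Definition conj_part (a : seq nat) : seq nat :=
  [seq count (fun x => j <= x) a | j <- iota 1 (foldr maxn 0 a)].

Definition majorizes (a b : seq nat) : Prop :=
  forall k, 1 <= k <= minn (size a) (size b) ->
    sumn (take k b) <= sumn (take k a).

(* Main.v *)
Require Import Defs.
From mathcomp Require Import all_boot zify.

Lemma sum_int i j N : \sum_(0 <= m < N) ((i <= m) && (m < j) : nat) = minn j N - i.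
Proof.
elim: N => [|N IH]; first by rewrite big_geq //; lia.
rewrite big_nat_recr //= IH.
case: (leqP i N) => Hi; case: (ltnP N j) => Hj /=; lia.
Qed.

Lemma sum_lt k x : \sum_(0 <= i < k) ((i < x) : nat) = minn k x.
Proof.
elim: k => [|k IH]; first by rewrite big_geq //; lia.
rewrite big_nat_recr //= IH. case: (ltnP k x) => /= H; lia.
Qed.

Lemma sum_bool_le lo hi (P : pred nat) : \sum_(lo <= i < hi) (P i : nat) <= hi - lo.
Proof.
rewrite -[X in _ <= X]muln1 -sum_nat_const_nat.
by apply: leq_sum => i _; apply: leq_b1.
Qed.

Lemma sumn_take_nth (a : seq nat) k : sumn (take k a) = \sum_(0 <= i < k) nth 0 a i.
Proof.
elim: a k => [|x a IH] k.
  by rewrite /= big1 // => i _; rewrite nth_nil.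
case: k => [|k]; first by rewrite big_geq.
by rewrite big_nat_recl //= IH.
Qed.

Lemma count_nth_sum (P : pred nat) (b : seq nat) :
  count P b = \sum_(0 <= j < size b) (P (nth 0 b j) : nat).
Proof.
elim: b => [|x b IH]; first by rewrite big_geq.
by rewrite /= big_nat_recl //= IH.
Qed.

Lemma sum_take_count (P : pred nat) (d : seq nat) n r :
  P 0 = false -> size d <= n ->
  \sum_(0 <= m < n) ((P (nth 0 d m)) && (m < r) : nat) = count P (take r d).
Proof.
move=> P0; elim: d n r => [|x d IH] n r /= Hs.
  by rewrite big1 // => i _; rewrite nth_nil P0.
case: n Hs => [|n] // Hs.
rewrite big_nat_recl //=.
case: r => [|r].
  rewrite andbF /= big1 // => i _; by rewrite andbF.
under eq_bigr do rewrite ltnS. by rewrite andbT IH.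
Qed.

Lemma take_cat2 T r (s1 s2 : seq T) : take r (s1 ++ s2) = take r s1 ++ take (r - size s1) s2.
Proof.
elim: s1 r => [|x s1 IH] r /=; first by rewrite subn0.
case: r => [|r] /=; first by rewrite sub0n take0.
by rewrite subSS IH.
Qed.

Lemma count_iota_gt j p : count (fun x => j < x) (iota 1 p) = p - j.
Proof.
elim: p => [|p IH]; first by [].
rewrite -[p.+1]addn1 iotaD count_cat IH /= add1n.
case: (ltnP j p.+1) => H /=; lia.
Qed.

Definition Tq (s : nat -> nat) q := flatten [seq nseq (s j) j | j <- rev (iota 1 q)].

Lemma TS s q : Tq s q.+1 = nseq (s q.+1) q.+1 ++ Tq s q.
Proof. by rewrite /Tq -[q.+1]addn1 iotaD rev_cat /= addnC. Qed.

Lemma CT s q j : count (fun x => j < x) (Tq s q) = \sum_(j.+1 <= l < q.+1) s l.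
Proof.
elim: q => [|q IH]; first by rewrite big_geq.
rewrite TS count_cat count_nseq IH.
case: (ltnP j q.+1) => H.
  by rewrite (big_nat_recr _ _ _ H) /= mul1n addnC.
by rewrite !big_geq //; lia.
Qed.

Lemma TP s q j r : minn r (count (fun x => j < x) (Tq s q)) <= count (fun x => j < x) (take r (Tq s q)).
Proof.
elim: q r => [|q IH] r; first by rewrite /Tq /=; lia.
rewrite TS take_cat2 !count_cat size_nseq.
case: (ltnP j q.+1) => H.
  have E : take r (nseq (s q.+1) q.+1) = nseq (minn r (s q.+1)) q.+1.
    case: (leqP r (s q.+1)) => Hr; first by rewrite take_nseq //; congr nseq; lia.
    by rewrite take_oversize ?size_nseq; [congr nseq; lia | lia].
  rewrite E !count_nseq H !mul1n.
  have := IH (r - s q.+1); lia.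
rewrite !count_nseq CT big_geq /=; last by lia.
have -> : (j < q.+1) = false by lia. rewrite mul0n minn0; lia.
Qed.

Lemma dseqE q s : dseq q s = iota 1 q ++ Tq s q.
Proof. by []. Qed.

Lemma AB q s j : count (fun x => j < x) (dseq q s) = nth 0 (alphabar q s) j.
Proof.
rewrite dseqE count_cat count_iota_gt CT /alphabar.
case: (ltnP j q) => H.
  rewrite (nth_map 0) ?size_iota // nth_iota // add1n; lia.
rewrite nth_default ?size_map ?size_iota // big_geq //; lia.
Qed.

Lemma TD q s j k : j < q ->
  minn k (count (fun x => j < x) (dseq q s)) <= count (fun x => j < x) (take (j + k) (dseq q s)).
Proof.
move=> Hj; rewrite dseqE take_cat2 !count_cat take_iota !count_iota_gt size_iota.
have := TP s q j (j + k - q); lia.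
Qed.

Definition E (a : seq nat) m := \sum_(0 <= i < m.+1) ((m < nth 0 a i + i) : nat).
Definition cc (a : seq nat) k m := \sum_(0 <= i < k) ((i <= m) && (m < nth 0 a i + i) : nat).

Lemma LA (a : seq nat) : all (fun x => 0 < x) a -> forall i, nth 0 a i = 0 \/ nth 0 a i + i <= sumn a.
Proof.
elim: a => [|x a IH] /=; first by move=> _ i; left; rewrite nth_nil.
move=> /andP[Hx Ha] [|i] /=; first by right; lia.
case: (IH Ha i) => H; [by left | right; lia].
Qed.

Lemma nth_strip0 (s : seq nat) m : nth 0 (strip0 s) m = nth 0 s m.
Proof.
rewrite /strip0.
set r := rev s; set f := find _ r.
have Hs : s = rev (drop f r) ++ rev (take f r) by rewrite -rev_cat cat_take_drop revK.
rewrite [in RHS]Hs nth_cat.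
case: ltnP => // H.
rewrite nth_default //.
have Hf' : f <= size r by rewrite /f find_size.
rewrite !size_rev size_drop in H *.
case: (ltnP (m - (size r - f)) (size (take f r))) => H2; last by rewrite nth_default // size_rev.
rewrite nth_rev //.
have Hsz : size (take f r) = f by rewrite size_takel.
rewrite Hsz in H2 *.
rewrite nth_take; last by lia.
have := @before_find _ 0 (fun x => x != 0) r (f - (m - (size r - f)).+1).
move=> Hb; apply/esym/eqP/negbFE/Hb; rewrite -/f; lia.
Qed.

Lemma size_strip0 (s : seq nat) : size (strip0 s) <= size s.
Proof. by rewrite /strip0 size_rev size_drop size_rev leq_subr. Qed.

Lemma diag_entryE a m : diag_entry a m.+1 = E a m.
Proof.
rewrite /diag_entry /E -[1]/(1 + 0) iotaDl count_map -sum1_count big_mkcond /=.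
rewrite /index_iota subn0; apply: eq_bigr => i _ /=.
by rewrite add0n; case: ifP.
Qed.

Lemma L0 n a d : is_partition n a -> diag a = d -> forall m, nth 0 d m = E a m.
Proof.
move=> /and3P[_ Hpos /eqP Hn] <- m.
rewrite /diag nth_strip0 Hn.
case: (ltnP m n) => Hm.
  by rewrite (nth_map 0) ?size_iota // nth_iota // add1n diag_entryE.
rewrite nth_default ?size_map ?size_iota //.
rewrite /E big_nat_cond big1 // => i /andP[/andP[_ Hi] _].
case: (LA _ Hpos i) => H; [rewrite H|]; apply/eqP; rewrite eqb0 -leqNgt; lia.
Qed.

Lemma size_diag a : size (diag a) <= sumn a.
Proof. by apply: leq_trans (size_strip0 _) _; rewrite size_map size_iota. Qed.

Lemma cc_le_k a k m : cc a k m <= k.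
Proof. by have := sum_bool_le 0 k (fun i => (i <= m) && (m < nth 0 a i + i)); rewrite subn0. Qed.

Lemma cc_bounds a k m : cc a k m <= E a m /\ E a m - (m.+1 - k) <= cc a k m.
Proof.
rewrite /cc /E.
case: (leqP k m.+1) => Hk.
  rewrite (big_cat_nat (leq0n k) Hk) /=.
  have -> : \sum_(0 <= i < k) ((i <= m) && (m < nth 0 a i + i) : nat) = \sum_(0 <= i < k) ((m < nth 0 a i + i) : nat).
    rewrite big_nat_cond [RHS]big_nat_cond; apply: eq_bigr => i /andP[/andP[_ Hi] _].
    by have -> : i <= m by lia.
  have := sum_bool_le k m.+1 (fun i => m < nth 0 a i + i); lia.
rewrite (big_cat_nat (leq0n m.+1) (ltnW Hk)) /=.
rewrite [X in _ + X]big_nat_cond [X in _ + X]big1 ?addn0; last first.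
  by move=> i /andP[/andP[Hi _] _]; have -> : i <= m = false by lia.
have -> : \sum_(0 <= i < m.+1) ((i <= m) && (m < nth 0 a i + i) : nat) = \sum_(0 <= i < m.+1) ((m < nth 0 a i + i) : nat).
  rewrite big_nat_cond [RHS]big_nat_cond; apply: eq_bigr => i /andP[/andP[_ Hi] _].
  by have -> : i <= m by lia.
lia.
Qed.

Lemma rowsum n a k : is_partition n a ->
  sumn (take k a) = \sum_(0 <= m < n) cc a k m.
Proof.
move=> /and3P[_ Hpos /eqP Hn].
rewrite sumn_take_nth /cc exchange_big_nat /=.
apply: eq_bigr => i _; rewrite sum_int.
case: (LA _ Hpos i) => H; [rewrite H|]; lia.
Qed.

Lemma CP (b : seq nat) i : nth 0 (conj_part b) i <= count (fun x => i < x) b.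
Proof.
rewrite /conj_part.
case: (ltnP i (foldr maxn 0 b)) => H.
  by rewrite (nth_map 0) ?size_iota // nth_iota // add1n.
by rewrite nth_default ?size_map ?size_iota.
Qed.

Lemma sum_d_count n (d : seq nat) i : size d <= n ->
  \sum_(0 <= m < n) ((i < nth 0 d m) : nat) = count (fun x => i < x) d.
Proof.
move=> Hs.
rewrite -[in RHS](take_oversize (n := n) Hs) -(sum_take_count (fun x => i < x) d n n) //.
by apply: eq_big_nat => m /andP[_ Hm]; rewrite Hm andbT.
Qed.

Theorem proposition3p1 (n q : nat) (s : nat -> nat) (a : seq nat) :
  0 < n -> 1 <= q ->
  in_Delta n (dseq q s) ->
  is_partition n a -> diag a = dseq q s ->
  majorizes (alphabar q s) a /\ majorizes a (conj_part (alphabar q s)).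
Proof.
move=> _ _ _ Hp Hd.
set d := dseq q s.
have HL0 := L0 _ _ _ Hp Hd.
have Hsz : size d <= n.
  by rewrite /d -Hd; case/and3P: Hp => _ _ /eqP <-; apply: size_diag.
split=> k _.
- rewrite (rowsum _ _ k Hp) sumn_take_nth.
  apply: (@leq_trans (\sum_(0 <= m < n) minn k (nth 0 d m))).
    apply: leq_sum => m _; rewrite HL0.
    have [H _] := cc_bounds a k m; have := cc_le_k a k m; lia.
  under eq_bigr do rewrite -sum_lt.
  rewrite exchange_big_nat /=; apply: leq_sum => i _.
  by rewrite -AB sum_d_count.
- rewrite (rowsum _ _ k Hp) sumn_take_nth.
  set b := alphabar q s.
  have Hb : size b = q by rewrite /b /alphabar size_map size_iota.
  apply: (@leq_trans (\sum_(0 <= i < k) count (fun x => i < x) b)).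
    by apply: leq_sum => i _; apply: CP.
  under eq_bigr do rewrite count_nth_sum Hb.
  rewrite exchange_big_nat /=.
  under eq_bigr do rewrite sum_lt.
  apply: (@leq_trans (\sum_(0 <= j < q) count (fun x => j < x) (take (j + k) d))).
    rewrite big_nat_cond [X in _ <= X]big_nat_cond.
    apply: leq_sum => j /andP[/andP[_ Hj] _].
    by rewrite /b -AB; apply: TD.
  under eq_bigr => j _ do rewrite -(sum_take_count (fun x => j < x) d n (j + k) (ltn0 j) Hsz).
  rewrite exchange_big_nat /=.
  apply: leq_sum => m _.
  apply: (@leq_trans (\sum_(0 <= j < q) ((m.+1 - k <= j) && (j < nth 0 d m) : nat))).
    apply: leq_sum => j _.
    rewrite (_ : (m < j + k) = (m.+1 - k <= j)); first by rewrite andbC.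
    by apply/idP/idP => H; lia.
  rewrite sum_int HL0.
  have [_ H] := cc_bounds a k m; lia.
Qed.
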